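(* Let $(\mathcal X,\mathcal B,\pi)$, $r$, an arbitrary real-valued noise field $\varepsilon$, $Q$, $Q_*$, $\alpha\in(0,1)$ be as in the context. Assume: (a) $p_0,p_{\rm ref}\in\mathcal P_\pi$ with $\int p|\log p|\,d\pi<\infty$ for $p\in\{p_0,p_{\rm ref}\}$; (b) $\mathbb E_{X\sim p}[e^{|r(X)+\varepsilon(X)|}]<\infty$ for all $p\in\mathcal P_\pi$; (c) $0<Q_*<\infty$, $Q\le Q_*$ everywhere; (d) $\operatorname*{ess\,sup}_x p_0(x)/p_{\rm ref}(x)<\infty$; (e) $\alpha>\Bigl(\int\frac{Q_*}{Q_*-Q(x)}p_{\rm ref}(x)\,\pi(dx)\Bigr)^{-1}$; (f) $Q_{\min}:=\operatorname*{ess\,inf}_x Q(x)>0$. Let $p_{t+1}(x)=\alpha p_{\rm ref}(x)+(1-\alpha)p_t(x)Q(x)/\mathbb E_{X\sim p_t}Q(X)$, $w_t:=p_t/p_{\rm ref}$, and let $w_*$ be the unique fixed point of $L_N$ in $\mathcal P_{\mathbb P_{\rm ref}}$. Then $d_{\mathcal H}(w_t,w_* )$ is finite and strictly decreasing for all $t\ge1$, and $\lim_{t\to\infty}d_{\mathcal H}(w_t,w_* )=0$.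
   Context: $\pi$ is $\sigma$-finite; $\mathcal P_\pi$ = probability densities w.r.t. $\pi$; $r$ measurable; $\{\varepsilon(x)\}$ a real-valued random field. $Q(x):=e^{r(x)}\mathbb E[e^{\varepsilon(x)}]$, $Q_*:=\operatorname*{ess\,sup}_\pi Q$. In (e), the integrand is $+\infty$ where $Q=Q_*$ and the reciprocal of $+\infty$ is $0$. $\mathbb P_{\rm ref}(dx)=p_{\rm ref}(x)\pi(dx)$; $\mathcal P_{\mathbb P_{\rm ref}}$ = probability densities w.r.t. $\mathbb P_{\rm ref}$; $\langle f,g\rangle_{\rm ref}=\int fg\,d\mathbb P_{\rm ref}$; cone $\mathcal K=\{f\in L^1(\mathbb P_{\rm ref}):f>0\ \mathbb P_{\rm ref}\text{-a.s.}\}$. $L[f]=\alpha\langle f,Q\rangle_{\rm ref}+(1-\alpha)fQ$ and $L_N[f]=L[f]/\langle f,Q\rangle_{\rm ref}=\alpha+(1-\alpha)fQ/\langle f,Q\rangle_{\rm ref}$ on $\mathcal K$ (under (c),(e) a unique fixed point of $L_N$ in $\mathcal P_{\mathbb P_{\rm ref}}$ exists). Hilbert projective metric: for $u,v\in\mathcal K$, $d_{\mathcal H}(u,v)=\log\bigl(\operatorname*{ess\,sup}\frac uv\cdot\operatorname*{ess\,sup}\frac vu\bigr)$, essential suprema w.r.t. $\mathbb P_{\rm ref}$. *)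

(* Defs.v *)
From HB Require Import structures.
From mathcomp Require Import all_boot all_order all_algebra.
From mathcomp Require Import all_classical all_reals all_analysis ess_sup_inf.
Set Implicit Arguments. Unset Strict Implicit. Unset Printing Implicit Defensive.
Import Order.TTheory GRing.Theory Num.Theory.
Local Open Scope classical_set_scope.
Local Open Scope ring_scope.

Section defs.
Context d (X : measurableType d) (R : realType).
Variable pi : {measure set X -> \bar R}.

Definition is_density (p : X -> R) : Prop :=
  [/\ measurable_fun [set: X] p, (forall x, 0 <= p x) &
      (\int[pi]_x (p x)%:E = 1)%E].

(* "P_ref-almost surely", where P_ref(dx) = pref(x) pi(dx):
   P holds outside a measurable P_ref-null set *)
Definition ae_ref (pref : X -> R) (P : X -> Prop) : Prop :=
  exists N, [/\ measurable N, (\int[pi]_(x in N) (pref x)%:E = 0)%E &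
                [set x | ~ P x] `<=` N].

(* essential supremum w.r.t. P_ref (same definition as the library's ess_sup) *)
Definition ess_sup_ref (pref : X -> R) (f : X -> \bar R) : \bar R :=
  ereal_inf [set y | ae_ref pref (fun x => (f x <= y)%E)].

Definition inner_ref (pref f g : X -> R) : R :=
  fine (\int[pi]_x (f x * g x * pref x)%:E).

Definition hilbert_ref (pref u v : X -> R) : \bar R :=
  let a := ess_sup_ref pref (fun x => (u x / v x)%:E) in
  let b := ess_sup_ref pref (fun x => (v x / u x)%:E) in
  if (a \is a fin_num) && (b \is a fin_num) then (ln (fine a * fine b))%:E
  else +oo%E.

Fixpoint iter_p (alpha : R) (pref Q p0 : X -> R) (t : nat) : X -> R :=
  match t with
  | 0 => p0
  | t'.+1 => let pt := iter_p alpha pref Q p0 t' in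
      fun x => alpha * pref x +
               (1 - alpha) * pt x * Q x / fine (\int[pi]_y (pt y * Q y)%:E)
  end.

End defs.

Definition Qfun d (X : measurableType d) d' (Omega : measurableType d')
  (R : realType) (P : probability Omega R) (r : X -> R) (eps : X -> Omega -> R)
  (x : X) : \bar R :=
  ((expR (r x))%:E * \int[P]_w (expR (eps x w))%:E)%E.

(* a / b with the conventions a/0 = +oo for a > 0 and 0/0 = 0 *)
Definition ratio_e (R : realType) (a b : R) : \bar R :=
  if b == 0 then (if a == 0 then 0%E else +oo%E) else (a / b)%:E.

Definition einv (R : realType) (I : \bar R) : \bar R :=
  if I == +oo%E then 0%E else (1 / fine I)%:E.

(* Main.v *)
Require Import Defs.
From HB Require Import structures.
From mathcomp Require Import all_boot all_order all_algebra.
From mathcomp Require Import all_classical all_reals all_analysis ess_sup_inf.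
From mathcomp Require Import measurable_realfun ring lra.
Import Order.TTheory GRing.Theory Num.Theory.
Local Open Scope classical_set_scope.
Local Open Scope ring_scope.

Section gen.
Context d (T : measurableType d) (R : realType).
Variable mu : {measure set T -> \bar R}.
Local Open Scope ereal_scope.

Lemma le_integral_nm (f g : T -> \bar R) : (forall x, 0 <= f x) ->
  (forall x, f x <= g x) -> \int[mu]_x f x <= \int[mu]_x g x.
Proof.
move=> f0 fg.
have g0 x : 0 <= g x by apply: le_trans (fg x).
rewrite !ge0_integralTE//; apply: le_ereal_sup => _ [h /= hf <-].
exists h => //= x; exact: le_trans (hf x) (fg x).
Qed.

Lemma ae_le_integral_nm (f g : T -> \bar R) : (forall x, 0 <= f x) ->
  (forall x, 0 <= g x) -> measurable_fun [set: T] g ->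
  {ae mu, forall x, f x <= g x} -> \int[mu]_x f x <= \int[mu]_x g x.
Proof.
move=> f0 g0 mg [N [mN N0 sN]].
pose h x := g x + +oo * (\1_N x)%:E.
have h0 x : 0 <= +oo * (\1_N x : R)%:E by rewrite mule_ge0// lee_fin.
apply: (@le_trans _ _ (\int[mu]_x h x)).
  apply: le_integral_nm => // x; rewrite /h.
  have [Nx|Nx] := pselect (N x).
    rewrite indicE mem_set// mule1 addey ?leey//.
    by apply: contraTneq (g0 x) => ->.
  have : f x <= g x by apply: contrapT => /sN.
  move=> fg; rewrite indicE memNset// mule0 adde0 //.
rewrite /h ge0_integralD//; last first.
  apply: emeasurable_funM => //.
  by apply/(measurable_EFinP [set: T] (\1_N)); exact: measurable_indic.
rewrite ge0_integralZl//.
  by rewrite integral_indic// setIT N0 mule0 adde0.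
by apply/(measurable_EFinP [set: T] (\1_N)); exact: measurable_indic.
Qed.

End gen.



Section aeutil.
Context d (T : measurableType d) (R : realType).
Variable mu : {measure set T -> \bar R}.

Lemma aeS (P Q : T -> Prop) : {ae mu, forall x, P x} -> (forall x, P x -> Q x) ->
  {ae mu, forall x, Q x}.
Proof. by move=> hP PQ; apply: filterS hP. Qed.

Lemma aeS2 (P Q S : T -> Prop) : {ae mu, forall x, P x} -> {ae mu, forall x, Q x} ->
  (forall x, P x -> Q x -> S x) -> {ae mu, forall x, S x}.
Proof. by move=> hP hQ PQS; apply: filterS2 hP hQ. Qed.

Lemma aeAnd (P Q : T -> Prop) : {ae mu, forall x, P x} -> {ae mu, forall x, Q x} ->
  {ae mu, forall x, P x /\ Q x}.
Proof. by move=> hP hQ; apply: filterS2 hP hQ. Qed.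

Lemma ae_ex (P : T -> Prop) : (0 < mu setT)%E -> {ae mu, forall x, P x} -> exists x, P x.
Proof.
move=> mu0 hP.
have PF : ProperFilter (almost_everywhere mu) by exact: ae_properfilter_algebraOfSetsType.
by have [x Px] := filter_ex hP; exists x.
Qed.

End aeutil.
Arguments aeS {d T R mu P Q}.
Arguments aeS2 {d T R mu P Q S}.
Arguments ae_ex {d T R mu P}.
Arguments aeAnd {d T R mu P Q}.


Section real.
Variable R : realType.

Lemma step_upper (a dl W c M v u : R) : 0 < a -> 0 < dl -> dl * W = a ->
  a <= v -> v <= W -> 0 <= u -> u <= M * v -> 1 <= c * M -> 0 < c ->
  a * v + c * u * (v - a) <= (dl + (1 - dl) * M * c) * (v * v).
Proof.
move=> a0 d0 dW av vW u0 uM cM c0.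
have h1 : c * u * (v - a) <= c * (M * v) * (v - a).
  by rewrite ler_wpM2r ?subr_ge0// ler_wpM2l// ltW.
have h2 : 0 <= v * ((a - dl * v) * (c * M - 1)).
  apply: mulr_ge0; first lra.
  apply: mulr_ge0; last lra.
  rewrite subr_ge0 -dW; apply: ler_wpM2l => //; exact: ltW.
nra.
Qed.

Lemma step_lower (a dl W c M2 v u : R) : 0 < a -> 0 < dl -> dl * W = a ->
  a <= v -> v <= W -> 0 < M2 -> v <= M2 * u -> c <= M2 -> 0 < c ->
  (dl + (1 - dl) * (c / M2)) * (v * v) <= a * v + c * u * (v - a).
Proof.
move=> a0 d0 dW av vW M0 vM cM c0.
have hu : v / M2 <= u by rewrite ler_pdivrMr// mulrC.
have h1 : c * (v / M2) * (v - a) <= c * u * (v - a).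
  by rewrite ler_wpM2r ?subr_ge0// ler_wpM2l// ltW.
have h2 : 0 <= v * ((a - dl * v) * (1 - c / M2)).
  apply: mulr_ge0; first lra.
  apply: mulr_ge0.
    rewrite subr_ge0 -dW; apply: ler_wpM2l => //; exact: ltW.
  by rewrite subr_ge0 ler_pdivrMr// mul1r.
have e : c * (v / M2) * (v - a) = (c / M2) * v * (v - a) by ring.
nra.
Qed.

Lemma prod_ineq (dl a b c : R) : 0 <= dl <= 1 -> 0 < a -> 0 < b -> 1 <= a * b ->
  c <= b -> 0 < c ->
  (dl + (1 - dl) * a * c) <= (dl + (1 - dl) * (a * b)) * (dl + (1 - dl) * (c / b)).
Proof.
move=> /andP[d0 d1] a0 b0 ab cb c0.
have e : c / b * b = c by rewrite divfK// gt_eqF.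
have h : 0 <= dl * (1 - dl) * ((1 - c / b) * (a * b - 1)).
  apply: mulr_ge0; first nra.
  apply: mulr_ge0; last lra.
  by rewrite subr_ge0 ler_pdivrMr// mul1r.
rewrite -subr_ge0.
have -> : (dl + (1 - dl) * (a * b)) * (dl + (1 - dl) * (c / b)) -
  (dl + (1 - dl) * a * c) = dl * (1 - dl) * ((1 - c / b) * (a * b - 1)).
  by field; rewrite gt_eqF.
exact: h.
Qed.

Lemma ratio_le (u v a b : R) : 0 < a -> a <= v -> 0 < u -> u <= b ->
  u / v <= b / a.
Proof.
move=> a0 av u0 ub.
have v0 : 0 < v by apply: lt_le_trans av.
rewrite ler_pdivrMr//.
apply: (le_trans ub).
have b0 : 0 <= b / a.
  by apply: divr_ge0; [exact: (le_trans (ltW u0) ub)|exact: ltW].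
apply: (@le_trans _ _ (b / a * a)); first by rewrite divfK ?gt_eqF.
exact: ler_wpM2l.
Qed.

End real.
Arguments step_upper {R a dl W c M v u}.
Arguments step_lower {R a dl W c M2 v u}.
Arguments prod_ineq {R dl a b c}.
Arguments ratio_le {R u v a b}.

Section main.
Import numFieldNormedType.Exports.
Context (R : realType) d (X : measurableType d) (pi : {measure set X -> \bar R}).
Variables (alpha Qstar : R) (Q p0 pref wstar : X -> R).
Hypothesis mQ : measurable_fun [set: X] Q.
Hypothesis Q0 : forall x, 0 <= Q x.
Hypothesis QQ : forall x, Q x <= Qstar.
Hypothesis Qs0 : 0 < Qstar.
Hypothesis a0 : 0 < alpha.
Hypothesis a1 : alpha < 1.
Hypothesis mp0 : measurable_fun [set: X] p0.
Hypothesis p00 : forall x, 0 <= p0 x.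
Hypothesis mpref : measurable_fun [set: X] pref.
Hypothesis pref0 : forall x, 0 <= pref x.
Hypothesis pref1 : (\int[pi]_x (pref x)%:E = 1)%E.
Hypothesis hd : (ess_sup pi (fun x => ratio_e (p0 x) (pref x)) < +oo)%E.
Hypothesis he : (einv (\int[pi]_x ((if Q x == Qstar then +oo
                      else (Qstar / (Qstar - Q x))%:E) * (pref x)%:E)) < alpha%:E)%E.
Hypothesis mw : measurable_fun [set: X] wstar.
Hypothesis w0 : forall x, 0 <= wstar x.
Hypothesis w1 : (\int[pi]_x (wstar x * pref x)%:E = 1)%E.
Hypothesis wpos : ae_ref pi pref (fun x => 0 < wstar x).
Hypothesis wfix : ae_ref pi pref (fun x => wstar x =
     alpha + (1 - alpha) * wstar x * Q x / inner_ref pi pref wstar Q).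

Section mrefsec.
Local Open Scope ereal_scope.

Definition mref (A : set X) := \int[pi]_(x in A) (pref x)%:E.

Let mref0 : mref set0 = 0.
Proof. by rewrite /mref integral_set0. Qed.

Let mref_ge0 A : 0 <= mref A.
Proof. by apply: integral_ge0 => x _; rewrite lee_fin. Qed.

Let mref_sigma_additive : semi_sigma_additive mref.
Proof.
move=> /= A mA tA mUA.
rewrite /mref ge0_integral_bigcup//=; last first.
  by move=> x _; rewrite lee_fin.
  by apply/measurable_EFinP; exact: measurable_funS mpref.
apply: is_cvg_ereal_nneg_natsum_cond => n _ _.
by apply: integral_ge0 => /= x ?; rewrite lee_fin.
Qed.

HB.instance Definition _ := isMeasure.Build _ _ _
  mref mref0 mref_ge0 mref_sigma_additive.

Lemma ess_sup_refE (f : X -> \bar R) : ess_sup_ref pi pref f = ess_sup mref f.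
Proof. by []. Qed.

Lemma ae_refE {P : X -> Prop} : ae_ref pi pref P -> {ae mref, forall x, P x}.
Proof. by []. Qed.

Lemma ae_pi2ref {P : X -> Prop} : {ae pi, forall x, P x} -> {ae mref, forall x, P x}.
Proof.
case=> N [mN N0 sN]; exists N; split => //.
rewrite /mref null_set_integral//.
by apply/measurable_EFinP; exact: measurable_funS mpref.
Qed.

Lemma ae_pos : {ae mref, forall x, 0 < pref x}%R.
Proof.
exists (pref @^-1` `]-oo, 0%R]); split.
- by rewrite -[X in measurable X]setTI; apply: mpref => //.
- rewrite /mref integral0_eq// => x /=; rewrite in_itv /= => h.
  by congr EFin; apply/eqP; rewrite eq_le h pref0.
- by move=> x /= h; rewrite in_itv /=; rewrite leNgt; apply/negP.
Qed.

Lemma ae_ref2pi {P : X -> Prop} : {ae mref, forall x, P x} ->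
  {ae pi, forall x, (0 < pref x)%R -> P x}.
Proof.
case=> N [mN N0 sN].
have : \int[pi]_(x in N) `|(pref x)%:E| = 0.
  rewrite -N0 /mref; apply: eq_integral => x _.
  by rewrite gee0_abs// lee_fin.
move/(ae_eq_integral_abs pi mN) => /(_ _).
case.
  by apply/measurable_EFinP; exact: measurable_funS mpref.
move=> M [mM M0 sM]; exists M; split => // x /= hx; apply: sM => /= hN.
have [pp nP] : (0 < pref x)%R /\ ~ P x.
  by apply: contrapT => h; apply: hx => pp; apply: contrapT => nP; apply: h.
have := hN (sN x nP); rewrite /cst => -[] px.
by rewrite px ltxx in pp.
Qed.

End mrefsec.

Let mrefT : (mref setT = 1)%E.
Proof. by rewrite /mref. Qed.

Let mrefT0 : (0 < mref setT)%E.
Proof. by rewrite mrefT lte01. Qed.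

Let p t := iter_p pi alpha pref Q p0 t.
Let w t x := p t x / pref x.
Let Z t := fine (\int[pi]_y (p t y * Q y)%:E).
Let lam := inner_ref pi pref wstar Q.

Let pS t x : p t.+1 x = alpha * pref x + (1 - alpha) * p t x * Q x / Z t.
Proof. by []. Qed.

Let mp t : measurable_fun [set: X] (p t).
Proof.
elim: t => [|t ih]; first exact: mp0.
apply: (@measurable_funD _ _ _ _ (fun x => alpha * pref x)
  (fun x => (1 - alpha) * p t x * Q x / Z t)).
  exact: measurable_funM.
apply: (@measurable_funM _ _ _ _ (fun x => (1 - alpha) * p t x * Q x) (fun=> (Z t)^-1)) => //.
apply: measurable_funM => //; exact: measurable_funM.
Qed.

Let p_ge0 t x : 0 <= p t x.
Proof.
elim: t x => [|t ih] x; first exact: p00.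
rewrite pS; apply: addr_ge0; first by rewrite mulr_ge0// ltW.
apply: mulr_ge0; first by rewrite !mulr_ge0// subr_ge0 ltW.
rewrite invr_ge0; apply: fine_ge0; apply: integral_ge0 => y _.
by rewrite lee_fin mulr_ge0.
Qed.

Let Z_ge0 t : 0 <= Z t.
Proof.
apply: fine_ge0; apply: integral_ge0 => y _.
by rewrite lee_fin mulr_ge0.
Qed.

Let w_ge0 t x : 0 <= w t x.
Proof. by rewrite /w divr_ge0. Qed.

Let wS t x : 0 < pref x -> w t.+1 x = alpha + (1 - alpha) * w t x * Q x / Z t.
Proof.
move=> px; rewrite /w pS; set c := (Z t)^-1.
by field; rewrite gt_eqF.
Qed.

Let wS_ge t x : 0 < pref x -> alpha <= w t.+1 x.
Proof.
move=> px; rewrite wS// lerDl; apply: mulr_ge0; last by rewrite invr_ge0.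
by apply: mulr_ge0; [apply: mulr_ge0; [rewrite subr_ge0 ltW|exact: w_ge0]|exact: Q0].
Qed.

Let d_ae : exists Y, 0 <= Y /\ {ae pi, forall x,
  (pref x = 0 -> p0 x = 0) /\ (0 < pref x -> p0 x / pref x <= Y)}.
Proof.
have hge := ess_sup_ge pi (fun x => ratio_e (p0 x) (pref x)).
move: hd hge; set E := ess_sup _ _ => hdE hge.
have [Y [Y0 EY]] : exists Y : R, 0 <= Y /\ (E <= Y%:E)%E.
  move: hdE; case: E {hge} => [r| |] // _.
  - exists (Num.max r 0); split; first by rewrite le_max lexx orbT.
    by rewrite lee_fin le_max lexx.
  - by exists 0; split => //; rewrite leNye.
exists Y; split => //.
apply: filterS hge => x hx.
have {hx} : (ratio_e (p0 x) (pref x) <= Y%:E)%E := le_trans hx EY.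
rewrite /ratio_e; case: ifPn => [/eqP pz|pn].
  case: ifPn => [/eqP p0z _|_]; last by rewrite leye_eq.
  by split => // h; rewrite pz ltxx in h.
by rewrite lee_fin => h; split => // pz; rewrite pz eqxx in pn.
Qed.

Let p_eq : {ae pi, forall x, forall t, p t x = w t x * pref x}.
Proof.
have [Y [_ h]] := d_ae.
apply: filterS h => x [hz _] t.
have [pz|pn] := eqVneq (pref x) 0.
  rewrite pz mulr0; elim: t => [|t ih]; first exact: hz.
  by rewrite pS ih pz !(mulr0, mul0r, addr0).
by rewrite /w divfK.
Qed.

Let intZ (k : R) (f : X -> R) : 0 <= k -> measurable_fun [set: X] f ->
  (forall x, 0 <= f x) ->
  (\int[pi]_x (k * f x)%:E = k%:E * \int[pi]_x (f x)%:E)%E.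
Proof.
move=> k0 mf f0.
under eq_integral do rewrite EFinM.
apply: ge0_integralZl_EFin => //.
  by move=> x _; rewrite lee_fin.
by apply/measurable_EFinP.
Qed.

Let mwp : measurable_fun [set: X] (fun x => wstar x * pref x).
Proof. exact: measurable_funM. Qed.

Let int_wQ : (\int[pi]_x (wstar x * Q x * pref x)%:E = lam%:E)%E /\
  0 <= lam /\ lam <= Qstar.
Proof.
have le : (\int[pi]_x (wstar x * Q x * pref x)%:E <= Qstar%:E)%E.
  apply: (@le_trans _ _ (\int[pi]_x (Qstar * (wstar x * pref x))%:E)%E).
    apply: le_integral_nm => x.
      by rewrite lee_fin !mulr_ge0.
    rewrite lee_fin mulrAC [X in _ <= X]mulrC; apply: ler_wpM2l => //; exact: mulr_ge0.
  by rewrite intZ// ?w1 ?mule1// ?ltW// => x; rewrite mulr_ge0.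
have ge : (0 <= \int[pi]_x (wstar x * Q x * pref x)%:E)%E.
  by apply: integral_ge0 => x _; rewrite lee_fin !mulr_ge0.
have fin : (\int[pi]_x (wstar x * Q x * pref x)%:E)%E \is a fin_num.
  by rewrite ge0_fin_numE// (le_lt_trans le (ltry _)).
rewrite /lam /inner_ref fineK//; split => //; split; first exact: fine_ge0.
by rewrite -lee_fin fineK.
Qed.

Let lam_gt0 : 0 < lam.
Proof.
have [lamE [lam0 _]] := int_wQ.
rewrite lt_neqAle lam0 andbT; apply/negP => /eqP l0.
have h1 : {ae mref, forall x, wstar x = alpha}.
  apply: filterS (ae_refE wfix) => x ->.
  by rewrite (_ : inner_ref pi pref wstar Q = 0)// invr0 mulr0 addr0.
have h2 := ae_ref2pi h1.
have : (1 <= alpha%:E)%E.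
  rewrite -w1 -[alpha%:E]mule1 -pref1 -intZ//; last exact: ltW.
  apply: ae_le_integral_nm => //.
  - by move=> x; rewrite lee_fin mulr_ge0.
  - by move=> x; rewrite lee_fin mulr_ge0// ltW.
  - by apply/measurable_EFinP; exact: measurable_funM.
  apply: filterS h2 => x hx; have [px|px] := ltP 0 (pref x).
    by rewrite hx.
  have -> : pref x = 0 by apply/eqP; rewrite eq_le px pref0.
  by rewrite !mulr0.
by rewrite lee_fin leNgt a1.
Qed.

Let fix_ae : {ae mref, forall x, 0 < wstar x /\
  wstar x * lam = alpha * lam + (1 - alpha) * wstar x * Q x}.
Proof.
have lp := lam_gt0.
apply: filterS2 (ae_refE wpos) (ae_refE wfix) => x h1 h2; split => //.
rewrite {1}h2 -/lam; field; exact: lt0r_neq0.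
Qed.

Let lam_big : (1 - alpha) * Qstar < lam.
Proof.
have [_ [lam0 _]] := int_wQ. have lp := lam_gt0.
rewrite ltNge; apply/negP => hle.
move: he; set I := (\int[pi]_x _)%E => heI.
have Fle : (I <= (alpha^-1)%:E)%E.
  rewrite -[X in (_ <= X)%E]mule1 -w1 -intZ//; try (by rewrite invr_ge0 ltW); try (by move=> x; rewrite mulr_ge0).
  apply: ae_le_integral_nm => //.
  - move=> x; case: ifPn => _; apply: mule_ge0; rewrite ?lee_fin//.
    by rewrite divr_ge0 ?subr_ge0// ltW.
  - by move=> x; rewrite lee_fin !mulr_ge0// invr_ge0 ltW.
  - by apply/measurable_EFinP; apply: measurable_funM.
  apply: filterS (ae_ref2pi fix_ae) => x hx.
  have [px|px] := ltP 0 (pref x); last first.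
    have -> : pref x = 0 by apply/eqP; rewrite eq_le px pref0.
    by rewrite mule0 !mulr0.
  have [wp e2] := hx px.
  have Qlt : Q x < Qstar.
    rewrite lt_neqAle QQ andbT; apply/negP => /eqP Qe.
    have h3 : 0 <= wstar x * ((1 - alpha) * Qstar - lam).
      by rewrite mulr_ge0 ?subr_ge0// ltW.
    move: e2; rewrite Qe => e2.
    have h4 : 0 < alpha * lam by rewrite mulr_gt0.
    clear heI; nra.
  rewrite lt_eqF// -EFinM lee_fin mulrA; apply: ler_wpM2r => //.
  rewrite ler_pdivrMr ?subr_gt0//.
  have h5 : alpha * Qstar <= wstar x * (Qstar - Q x).
    have h6 : 0 <= wstar x * Q x * ((1 - alpha) * Qstar - lam).
      by rewrite !mulr_ge0 ?subr_ge0// ltW.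
    have h7 : alpha * lam * Qstar <= wstar x * lam * (Qstar - Q x).
      have e3 : alpha * lam * Qstar =
          (wstar x * lam - (1 - alpha) * wstar x * Q x) * Qstar.
        by rewrite e2; ring.
      rewrite e3 -subr_ge0.
      have -> : wstar x * lam * (Qstar - Q x) -
        (wstar x * lam - (1 - alpha) * wstar x * Q x) * Qstar =
        wstar x * Q x * ((1 - alpha) * Qstar - lam) by ring.
      exact: h6.
    rewrite -(@ler_pM2r _ lam)//; clear heI; nra.
  by rewrite -(ler_pM2l a0) !mulrA mulfV ?gt_eqF// mul1r.
have Fge : (1 <= I)%E.
  rewrite -pref1; apply: le_integral_nm => x; first by rewrite lee_fin.
  case: ifPn => [_|hne].
    have [pz|pp] := eqVneq (pref x) 0; first by rewrite pz mule0.
    by rewrite gt0_mulye ?leey// lte_fin lt_neqAle eq_sym pp pref0.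
  rewrite -EFinM lee_fin ler_peMl//.
  have QQs : 0 < Qstar - Q x by rewrite subr_gt0 lt_neqAle hne QQ.
  by rewrite ler_pdivlMr// mul1r lerBlDr lerDl.
move: heI Fle Fge; clearbody I; case: I => [r| |] //= he' Fle Fge.
rewrite /einv /= lte_fin in he'.
rewrite lee_fin in Fle; rewrite lee_fin in Fge.
have r0 : 0 < r by apply: lt_le_trans Fge.
have : alpha <= 1 / r.
  rewrite ler_pdivlMr// -(@ler_pM2l _ alpha^-1) ?invr_gt0// mulrA mulVf ?gt_eqF//.
  by rewrite mul1r mulr1.
by rewrite leNgt he'.
Qed.

Let Wmax := alpha * lam / (lam - (1 - alpha) * Qstar).
Let dl := (lam - (1 - alpha) * Qstar) / lam.

Let dl_gt0 : 0 < dl.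
Proof. by rewrite /dl divr_gt0 ?subr_gt0// lam_big. Qed.

Let dl_le1 : dl <= 1.
Proof.
rewrite /dl ler_pdivrMr ?lam_gt0// mul1r lerBlDr lerDl mulr_ge0// ?subr_ge0 ltW//.
Qed.

Let dlW : dl * Wmax = alpha.
Proof.
have := lam_big; have := lam_gt0 => lp lb.
rewrite /dl /Wmax; field; rewrite ?gt_eqF// subr_gt0//.
Qed.

Let wstar_ae : {ae mref, forall x, [/\ 0 < wstar x, alpha <= wstar x,
  wstar x <= Wmax & wstar x * lam = alpha * lam + (1 - alpha) * wstar x * Q x]}.
Proof.
have lp := lam_gt0; have lb := lam_big.
apply: filterS fix_ae => x [wp e]; split => //.
  have h : 0 <= (1 - alpha) * wstar x * Q x.
    by rewrite !mulr_ge0 ?subr_ge0// ltW.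
  rewrite -(@ler_pM2r _ lam)// e lerDl//.
have h : (1 - alpha) * wstar x * Q x <= (1 - alpha) * wstar x * Qstar.
  by rewrite ler_wpM2l// mulr_ge0 ?subr_ge0// ltW.
rewrite /Wmax ler_pdivlMr ?subr_gt0//.
have : wstar x * lam <= alpha * lam + (1 - alpha) * wstar x * Qstar.
  by rewrite e lerD2l.
nra.
Qed.

Let Z_bounds t (M M2 : R) : 0 < M -> 0 < M2 ->
  {ae mref, forall x, w t x <= M * wstar x /\ wstar x <= M2 * w t x} ->
  Z t <= M * lam /\ lam <= M2 * Z t.
Proof.
move=> M0 M20 hb.
have [lamE [lam0 _]] := int_wQ.
have hpi := ae_ref2pi hb.
have mwQp : measurable_fun [set: X] (fun x => wstar x * Q x * pref x).
  by apply: measurable_funM => //; exact: measurable_funM.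
have up : (\int[pi]_y (p t y * Q y)%:E <= (M * lam)%:E)%E.
  rewrite EFinM -lamE -intZ//; last 2 first.
  - exact: ltW.
  - by move=> x; rewrite !mulr_ge0.
  apply: ae_le_integral_nm.
  - by move=> x; rewrite lee_fin mulr_ge0.
  - by move=> x; rewrite lee_fin !mulr_ge0// ltW.
  - by apply/measurable_EFinP; exact: measurable_funM.
  apply: filterS2 hpi p_eq => x h1 h2; rewrite lee_fin (h2 t).
  have [px|px] := ltP 0 (pref x); last first.
    have -> : pref x = 0 by apply/eqP; rewrite eq_le px pref0.
    by rewrite !(mulr0, mul0r).
  have [h3 _] := h1 px.
  have h4 : 0 <= (M * wstar x - w t x) * Q x * pref x.
    by rewrite !mulr_ge0 ?subr_ge0.
  nra.
have ge : (0 <= \int[pi]_y (p t y * Q y)%:E)%E.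
  by apply: integral_ge0 => y _; rewrite lee_fin mulr_ge0.
have fin : (\int[pi]_y (p t y * Q y)%:E)%E \is a fin_num.
  by rewrite ge0_fin_numE// (le_lt_trans up (ltry _)).
split; first by rewrite /Z -lee_fin fineK.
rewrite -lee_fin -lamE EFinM /Z fineK// -intZ//; last 3 first.
- exact: ltW.
- by apply: measurable_funM.
- by move=> x; rewrite mulr_ge0.
apply: ae_le_integral_nm.
- by move=> x; rewrite lee_fin !mulr_ge0.
- by move=> x; rewrite lee_fin !mulr_ge0// ltW.
- by apply/measurable_EFinP; apply: measurable_funM => //; exact: measurable_funM.
apply: filterS2 hpi p_eq => x h1 h2; rewrite lee_fin (h2 t).
have [px|px] := ltP 0 (pref x); last first.
  have -> : pref x = 0 by apply/eqP; rewrite eq_le px pref0.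
  by rewrite !(mulr0, mul0r).
have [_ h3] := h1 px.
have h4 : 0 <= (M2 * w t x - wstar x) * Q x * pref x.
  by rewrite !mulr_ge0 ?subr_ge0.
nra.
Qed.

Let pair (u v : X -> R) (M M2 : R) :
  {ae mref, forall x, [/\ 0 < u x, 0 < v x, u x / v x <= M & v x / u x <= M2]} ->
  exists a b, [/\ ess_sup mref (fun x => (u x / v x)%:E) = a%:E,
    ess_sup mref (fun x => (v x / u x)%:E) = b%:E, 0 < a, 0 < b &
    [/\ 1 <= a * b, a <= M & b <= M2]].
Proof.
move=> h.
have hA := ess_sup_ge mref (fun x => (u x / v x)%:E).
have hB := ess_sup_ge mref (fun x => (v x / u x)%:E).
have AM : (ess_sup mref (fun x => (u x / v x)%:E) <= M%:E)%E.
  by apply/ess_supP; apply: filterS h => x [_ _ h1 _]; rewrite lee_fin.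
have BM : (ess_sup mref (fun x => (v x / u x)%:E) <= M2%:E)%E.
  by apply/ess_supP; apply: filterS h => x [_ _ _ h1]; rewrite lee_fin.
have [x0 [[ux vx _ _] [hxA hxB]]] := ae_ex mrefT0 (aeAnd h (aeAnd hA hB)).
move: AM BM hxA hxB.
case: (ess_sup mref (fun x => (u x / v x)%:E)) => [a| |] AM' BM' hA' hB' //;
  try by rewrite leeNy_eq in hA'.
move: AM' BM' hA' hB'.
case: (ess_sup mref (fun x => (v x / u x)%:E)) => [b| |] AM' BM' hA' hB' //;
  try by rewrite leeNy_eq in hB'.
move: AM' BM' hA' hB'.
rewrite !lee_fin => aM bM ha hb.
have r1 : 0 < u x0 / v x0 by rewrite divr_gt0.
have r2 : 0 < v x0 / u x0 by rewrite divr_gt0.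
exists a, b; split => //.
- exact: lt_le_trans ha.
- exact: lt_le_trans hb.
split => //.
have -> : 1 = (u x0 / v x0) * (v x0 / u x0).
  by rewrite mulrA divfK ?gt_eqF// mulfV ?gt_eqF.
by apply: ler_pM => //; exact: ltW.
Qed.

Let A t := ess_sup mref (fun x => (w t x / wstar x)%:E).
Let B t := ess_sup mref (fun x => (wstar x / w t x)%:E).
Let K t := fine (A t) * fine (B t).
Let Inv t := exists a b, [/\ A t = a%:E, B t = b%:E & 1 <= a * b].

Let base : Inv 1.
Proof.
have [Y [Y0 hY]] := d_ae.
have lp := lam_gt0.
set C := alpha + (1 - alpha) * (Y * Qstar) / Z 0.
have hC : {ae mref, forall x, 0 < pref x -> alpha <= w 1 x /\ w 1 x <= C}.
  apply: filterS (ae_pi2ref hY) => x [_ h] px; split; first exact: wS_ge.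
  rewrite wS// lerD2l; apply: ler_wpM2r; first by rewrite invr_ge0.
  rewrite -mulrA; apply: ler_wpM2l; first by rewrite subr_ge0 ltW.
  by apply: ler_pM; [exact: w_ge0|exact: Q0|exact: h px|exact: QQ].
have := @pair (w 1) wstar (C / alpha) (Wmax / alpha).
case.
  apply: filterS2 (aeAnd hC ae_pos) wstar_ae => x [hx px] [wp wa wW _].
  have [h1 h2] := hx px.
  have w1p : 0 < w 1 x by apply: lt_le_trans h1.
  split => //; exact: ratio_le.
move=> a [b [Ae Be _ _ [ab _ _]]].
by exists a, b.
Qed.

Let step t : Inv t.+1 -> Inv t.+2 /\ K t.+2 <= dl + (1 - dl) * K t.+1.
Proof.
case=> a [b [Ae Be ab]].
have lp := lam_gt0.
have hA : {ae mref, forall x, ((w t.+1 x / wstar x)%:E <= a%:E)%E}.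
  rewrite -Ae; exact: ess_sup_ge.
have hB : {ae mref, forall x, ((wstar x / w t.+1 x)%:E <= b%:E)%E}.
  rewrite -Be; exact: ess_sup_ge.
have hb0 : {ae mref, forall x, [/\ 0 < w t.+1 x, 0 < wstar x,
    w t.+1 x <= a * wstar x & wstar x <= b * w t.+1 x]}.
  apply: filterS2 (aeAnd hA hB) (aeAnd ae_pos wstar_ae) => x [h1 h2] [px [wp _ _ _]].
  have up : 0 < w t.+1 x by apply: (lt_le_trans a0); exact: wS_ge.
  rewrite !lee_fin in h1 h2.
  by split => //; rewrite -ler_pdivrMr.
have [x0 [u0 v0 h1 h2]] := ae_ex mrefT0 hb0.
have a0' : 0 < a.
  by rewrite -(pmulr_lgt0 _ v0); apply: lt_le_trans h1.
have b0' : 0 < b.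
  by rewrite -(pmulr_lgt0 _ u0); apply: lt_le_trans h2.
have hb : {ae mref, forall x, w t.+1 x <= a * wstar x /\ wstar x <= b * w t.+1 x}.
  by apply: filterS hb0 => x [].
have [Zu Zl] := @Z_bounds t.+1 a b a0' b0' hb.
have Zp : 0 < Z t.+1.
  by rewrite -(pmulr_rgt0 _ b0'); apply: lt_le_trans Zl.
set c := lam / Z t.+1.
have c0 : 0 < c by rewrite divr_gt0.
have cb : c <= b by rewrite ler_pdivrMr.
have ca : 1 <= c * a.
  by rewrite mulrAC ler_pdivlMr// mul1r mulrC.
set A' := dl + (1 - dl) * a * c.
set Bi := dl + (1 - dl) * (c / b).
have Bi0 : 0 < Bi.
  rewrite /Bi ltr_pwDl//; apply: mulr_ge0; first by rewrite subr_ge0.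
  by rewrite divr_ge0 ?ltW.
have := @pair (w t.+2) wstar A' Bi^-1.
case.
  apply: filterS2 hb0 (aeAnd ae_pos wstar_ae) => x [up vp uM vM] [px [_ va vW e]].
  have u'p : 0 < w t.+2 x by apply: (lt_le_trans a0); exact: wS_ge.
  have key : w t.+2 x * wstar x = alpha * wstar x + c * w t.+1 x * (wstar x - alpha).
    have e' : (1 - alpha) * wstar x * Q x = lam * (wstar x - alpha).
      have -> : (1 - alpha) * wstar x * Q x = wstar x * lam - alpha * lam by rewrite e; ring.
      ring.
    rewrite wS// /c.
    have -> : (alpha + (1 - alpha) * w t.+1 x * Q x / Z t.+1) * wstar x =
      alpha * wstar x + ((1 - alpha) * wstar x * Q x) * w t.+1 x / Z t.+1.
      by field; rewrite gt_eqF.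
    by rewrite e'; field; rewrite gt_eqF.
  have su := step_upper a0 dl_gt0 dlW va vW (ltW up) uM ca c0.
  have sl := step_lower a0 dl_gt0 dlW va vW b0' vM cb c0.
  rewrite -key in su sl.
  split => //.
    rewrite ler_pdivrMr// -(ler_pM2r vp); apply: (le_trans su); by rewrite mulrA.
  rewrite ler_pdivrMr// -(ler_pM2l Bi0) mulrA mulfV ?gt_eqF// mul1r.
  rewrite -(ler_pM2r vp); apply: (le_trans _ sl); by rewrite mulrA.
move=> a' [b' [Ae' Be' a'0 b'0 [ab' a'M b'M]]].
split; first by exists a', b'.
have Ae'' : A t.+2 = a'%:E := Ae'. have Be'' : B t.+2 = b'%:E := Be'.
rewrite /K Ae Be Ae'' Be'' /=.
apply: (@le_trans _ _ (A' * Bi^-1)).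
  by apply: ler_pM => //; exact: ltW.
rewrite ler_pdivrMr//.
apply: prod_ineq => //.
by rewrite (ltW dl_gt0) dl_le1.
Qed.

Let inv : forall t, Inv t.+1.
Proof. by elim => [|t ih]; [exact: base | exact: (step t ih).1]. Qed.

Let rec t : K t.+2 <= dl + (1 - dl) * K t.+1.
Proof. exact: (step t (inv t)).2. Qed.

Let hE t : hilbert_ref pi pref (w t.+1) wstar = (ln (K t.+1))%:E /\ 1 <= K t.+1.
Proof.
case: (inv t) => a [b [Ae Be ab]].
have -> : hilbert_ref pi pref (w t.+1) wstar =
    if (A t.+1 \is a fin_num) && (B t.+1 \is a fin_num) then
      (ln (fine (A t.+1) * fine (B t.+1)))%:E else +oo%E.
  by [].
by rewrite /K Ae Be /=.
Qed.

Let Kge t : 1 <= K t.+1.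
Proof. exact: (hE t).2. Qed.

Let Kpos t : K t.+1 \is Num.pos.
Proof. by rewrite posrE (lt_le_trans ltr01). Qed.

Let Kid t : K t.+1 - (dl + (1 - dl) * K t.+1) = dl * (K t.+1 - 1).
Proof. ring. Qed.

Let Kdec t : dl + (1 - dl) * K t.+1 <= K t.+1.
Proof. by rewrite -subr_ge0 Kid mulr_ge0 ?subr_ge0// ?Kge// ltW. Qed.

Let gK n : K n.+1 - 1 <= (K 1 - 1) * (1 - dl) ^+ n.
Proof.
elim: n => [|n ih]; first by rewrite expr0 mulr1.
have h2 : 0 <= 1 - dl by rewrite subr_ge0.
have h3 := ler_wpM2l h2 ih.
apply: (@le_trans _ _ ((1 - dl) * (K n.+1 - 1))).
  have e : (1 - dl) * (K n.+1 - 1) + 1 = dl + (1 - dl) * K n.+1 by ring.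
  by rewrite lerBlDr e; exact: rec.
have e2 : (1 - dl) * ((K 1 - 1) * (1 - dl) ^+ n) = (K 1 - 1) * (1 - dl) ^+ n.+1.
  by rewrite exprS; ring.
by rewrite -e2.
Qed.

Let hr : (fun n => ln (K n.+1)) @ \oo --> 0.
Proof.
apply: (@squeeze_cvgr _ _ _ _ (fun=> 0) (geometric (K 1 - 1) (1 - dl))).
- apply: nearW => n /=; rewrite ln_ge0 ?Kge//=.
  apply: (le_trans _ (gK n)).
  have := expR_ge1Dx (ln (K n.+1)); rewrite lnK ?Kpos// => h.
  by rewrite lerBrDl.
- exact: cvg_cst.
- apply: cvg_geometric; rewrite ger0_norm ?subr_ge0//.
  by rewrite ltrBlDr ltrDl.
Qed.

Let hrE : (fun n => (ln (K n.+1))%:E) @ \oo --> 0%:E.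
Proof. by apply: cvg_EFin; [exact: nearW | exact: hr]. Qed.

Theorem main_thm : let w' := fun t x => iter_p pi alpha pref Q p0 t x / pref x in
  [/\ (forall t, (1 <= t)%N -> (hilbert_ref pi pref (w' t) wstar < +oo)%E),
      (forall t, (1 <= t)%N ->
         (hilbert_ref pi pref (w' t.+1) wstar <= hilbert_ref pi pref (w' t) wstar)%E
         /\ ((0 < hilbert_ref pi pref (w' t) wstar)%E ->
             (hilbert_ref pi pref (w' t.+1) wstar < hilbert_ref pi pref (w' t) wstar)%E))
    & (hilbert_ref pi pref (w' t) wstar @[t --> \oo] --> 0%E)].
Proof.
move=> w'.
have d0 := dl_gt0; have d1 := dl_le1.
split.
- by case=> [//|t] _; rewrite (hE t).1; exact: ltry.
- case=> [//|t] _; rewrite (hE t.+1).1 (hE t).1 lee_fin lte_fin; split.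
    by rewrite ler_ln; [exact: (le_trans (rec t) (Kdec t))|exact: Kpos|exact: Kpos].
  rewrite lte_fin => lp.
  have K1 : 1 < K t.+1.
    by rewrite ltNge; apply/negP => /ln_le0; rewrite leNgt lp.
  rewrite ltr_ln; [|exact: Kpos|exact: Kpos]; apply: (le_lt_trans (rec t)).
  by rewrite -subr_gt0 Kid mulr_gt0// subr_gt0.
rewrite -cvg_shiftS.
rewrite (_ : [sequence _]_n = (fun n => (ln (K n.+1))%:E)); first exact: hrE.
by apply/funext => n /=; exact: (hE n).1.
Qed.

End main.

Theorem theorem6 (R : realType)
  (d : measure_display) (X : measurableType d) (pi : {measure set X -> \bar R})
  (d' : measure_display) (Omega : measurableType d') (P : probability Omega R)
  (r : X -> R) (eps : X -> Omega -> R) (alpha Qstar : R)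
  (p0 pref wstar : X -> R) :
  sigma_finite [set: X] pi ->
  measurable_fun [set: X] r ->
  measurable_fun [set: X * Omega] (fun z => eps z.1 z.2) ->
  0 < alpha < 1 ->
  (* (a) *)
  is_density pi p0 -> is_density pi pref ->
  (\int[pi]_x (p0 x * `|ln (p0 x)|)%:E < +oo)%E ->
  (\int[pi]_x (pref x * `|ln (pref x)|)%:E < +oo)%E ->
  (* (b) *)
  (forall p, is_density pi p ->
     (\int[pi]_x ((p x)%:E * \int[P]_w (expR `|r x + eps x w|)%:E) < +oo)%E) ->
  (* (c) *)
  ess_sup pi (Qfun P r eps) = Qstar%:E -> 0 < Qstar ->
  (forall x, (Qfun P r eps x <= Qstar%:E)%E) ->
  (* (d) *)
  (ess_sup pi (fun x => ratio_e (p0 x) (pref x)) < +oo)%E ->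
  (* (e) *)
  (einv (\int[pi]_x ((if fine (Qfun P r eps x) == Qstar then +oo
                      else (Qstar / (Qstar - fine (Qfun P r eps x)))%:E)
                     * (pref x)%:E)) < alpha%:E)%E ->
  (* (f) *)
  (0 < ess_inf pi (Qfun P r eps))%E ->
  (* w_* : the fixed point of L_N in P_{P_ref} *)
  measurable_fun [set: X] wstar -> (forall x, 0 <= wstar x) ->
  (\int[pi]_x (wstar x * pref x)%:E = 1)%E ->
  ae_ref pi pref (fun x => 0 < wstar x) ->
  ae_ref pi pref (fun x => wstar x =
     alpha + (1 - alpha) * wstar x * fine (Qfun P r eps x)
             / inner_ref pi pref wstar (fun y => fine (Qfun P r eps y))) ->
  let w := fun t x =>
    iter_p pi alpha pref (fun y => fine (Qfun P r eps y)) p0 t x / pref x in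
  [/\ (forall t, (1 <= t)%N -> (hilbert_ref pi pref (w t) wstar < +oo)%E),
      (forall t, (1 <= t)%N ->
         (hilbert_ref pi pref (w t.+1) wstar <= hilbert_ref pi pref (w t) wstar)%E
         /\ ((0 < hilbert_ref pi pref (w t) wstar)%E ->
             (hilbert_ref pi pref (w t.+1) wstar < hilbert_ref pi pref (w t) wstar)%E))
    & (hilbert_ref pi pref (w t) wstar @[t --> \oo] --> 0%E)].
Proof.
move=> sfin mr meps /andP[a0 a1] [mp0 p00 _] [mpref pref0 pref1] _ _ _
  hQs Qs0 hQQ hd he _ mw w0 w1 wpos wfix.
set Q := fun y => fine (Qfun P r eps y).
have Qf0 x : (0 <= Qfun P r eps x)%E.
  apply: mule_ge0; first by rewrite lee_fin expR_ge0.
  by apply: integral_ge0 => y _; rewrite lee_fin expR_ge0.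
have Q0 x : 0 <= Q x by apply: fine_ge0.
have QQ x : Q x <= Qstar.
  have fin : Qfun P r eps x \is a fin_num.
    by rewrite ge0_fin_numE// (le_lt_trans (hQQ x) (ltry _)).
  by rewrite -lee_fin /Q fineK.
have mQ : measurable_fun [set: X] Q.
  apply: (measurableT_comp (fine_measurable measurableT)).
  apply: emeasurable_funM.
    apply/measurable_EFinP; exact: measurableT_comp.
  have := @measurable_fun_fubini_tonelli_F _ _ X Omega R P
    (fun z => (expR (eps z.1 z.2))%:E).
  apply.
    by apply/measurable_EFinP; exact: measurableT_comp.
  by move=> z; rewrite lee_fin expR_ge0.
exact: (@main_thm R d X pi alpha Qstar Q p0 pref wstar mQ Q0 QQ Qs0 a0 a1
  mp0 p00 mpref pref0 pref1 hd he mw w0 w1 wpos wfix).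
Qed.
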